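(* Let $\eta:G\to\mathrm{U}(1)(\mathbb{F}_{p^2}/\mathbb{F}_p)$ be the composite of $\det:G\to\mathrm{U}(1)(\mathbb{Q}_{p^2}/\mathbb{Q}_p)$ with reduction modulo $p$. Then $\eta$ is surjective and $\ker(\eta)=G_0$.
   Context: $p$ odd prime; $\mathbb{Q}_{p^2}$ the unramified quadratic extension of $\mathbb{Q}_p$, integers $\mathbb{Z}_{p^2}$, automorphism $x\mapsto\bar x$. $G=\mathrm{U}(1,1)(\mathbb{Q}_{p^2}/\mathbb{Q}_p)=\{g\in\mathrm{GL}_2(\mathbb{Q}_{p^2}):g^*sg=s\}$, $s=\begin{pmatrix}0&1\\1&0\end{pmatrix}$; $G_S=G\cap\mathrm{SL}_2(\mathbb{Q}_{p^2})$. $\mathrm{U}(1)(\mathbb{Q}_{p^2}/\mathbb{Q}_p)=\{x:x\bar x=1\}$, $\mathrm{U}(1)(\mathbb{F}_{p^2}/\mathbb{F}_p)=\{a\in\mathbb{F}_{p^2}^\times:a^{p+1}=1\}$, $\mathrm{U}(1)_1=\mathrm{U}(1)(\mathbb{Q}_{p^2}/\mathbb{Q}_p)\cap(1+p\mathbb{Z}_{p^2})$. $G_0$ is the subgroup of $G$ generated by $G_S$ and the scalar matrices $a\cdot\mathrm{id}$ with $a\in\mathrm{U}(1)_1$. *)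

(* Defs.v *)
From HB Require Import structures.
From mathcomp Require Import all_boot all_order all_algebra all_field.
Set Implicit Arguments. Unset Strict Implicit. Unset Printing Implicit Defensive.
Import Order.TTheory GRing.Theory Num.Theory.
Local Open Scope ring_scope.

(* Abstract description of Q_{p^2} with its Galois conjugation, its    *)
(* p-adic valuation and reduction modulo p onto F_{p^2}.               *)
(* A complete discretely valued field K with v(p) = 1 (hence char 0,   *)
(* p unramified) and residue field of cardinality p^2 is isomorphic to *)
(* Q_{p^2}; a nontrivial field automorphism of it is the Galois        *)
(* conjugation.                                          *)

Definition integral (K : fieldType) (v : K -> int) (x : K) : Prop :=
  x = 0 \/ 0 <= v x.

(* x is "N-small": x = 0 or v x >= N, i.e. x \in p^N Z_{p^2} *)
Definition small (K : fieldType) (v : K -> int) (N : int) (x : K) : Prop :=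
  x = 0 \/ N <= v x.

Record unram_quad_setup (p : nat) (K : fieldType) (conj : {rmorphism K -> K})
    (v : K -> int) (F : finFieldType) (red : K -> F) : Prop := {
  conj_invol : forall x, conj (conj x) = x;
  conj_nontriv : exists x, conj x != x;
  v_mul : forall x y, x != 0 -> y != 0 -> v (x * y) = v x + v y;
  v_add : forall x y, x != 0 -> y != 0 -> x + y != 0 ->
            Num.min (v x) (v y) <= v (x + y);
  p_neq0 : (p%:R : K) != 0;
  v_p : v p%:R = 1;
  v_conj : forall x, x != 0 -> v (conj x) = v x;
  v_complete : forall u : nat -> K,
    (forall N : int, exists M, forall m n, (M <= m)%N -> (M <= n)%N ->
        small v N (u m - u n)) ->
    exists l, forall N : int, exists M, forall n, (M <= n)%N -> small v N (u n - l);
  red_add : forall x y, integral v x -> integral v y -> red (x + y) = red x + red y;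
  red_mul : forall x y, integral v x -> integral v y -> red (x * y) = red x * red y;
  red_1 : red 1 = 1;
  red_ker : forall x, integral v x -> (red x = 0 <-> small v 1 x);
  red_surj : forall a : F, exists x, integral v x /\ red x = a
}.

Definition smx (K : fieldType) : 'M[K]_2 := \matrix_(i, j) (i != j)%:R.

Definition adjc (K : fieldType) (conj : {rmorphism K -> K}) (g : 'M[K]_2) :=
  (map_mx conj g)^T.

(* G = U(1,1)(Q_{p^2}/Q_p) *)
Definition inG (K : fieldType) (conj : {rmorphism K -> K}) (g : 'M[K]_2) : Prop :=
  adjc conj g *m smx K *m g = smx K.

Definition inGS (K : fieldType) (conj : {rmorphism K -> K}) (g : 'M[K]_2) : Prop :=
  inG conj g /\ \det g = 1.

Definition inU1_1 (K : fieldType) (conj : {rmorphism K -> K}) (v : K -> int)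
    (a : K) : Prop :=
  a * conj a = 1 /\ small v 1 (a - 1).

Inductive gen_grp (K : fieldType) (S : 'M[K]_2 -> Prop) : 'M[K]_2 -> Prop :=
  | gen_base : forall g, S g -> gen_grp S g
  | gen_one : gen_grp S 1%:M
  | gen_mul : forall g h, gen_grp S g -> gen_grp S h -> gen_grp S (g *m h)
  | gen_inv : forall g, gen_grp S g -> gen_grp S (invmx g).

(* G_0 = <G_S, a.id (a in U(1)_1)> *)
Definition inG0 (K : fieldType) (conj : {rmorphism K -> K}) (v : K -> int)
    (g : 'M[K]_2) : Prop :=
  gen_grp (fun h => inGS conj h \/ exists a, inU1_1 conj v a /\ h = a%:M) g.

(* Main.v *)
Require Import Defs.
From HB Require Import structures.
From mathcomp Require Import all_boot all_order all_algebra all_field.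
From mathcomp Require Import zify ring lra.
Import Order.TTheory GRing.Theory Num.Theory.
Set Implicit Arguments. Unset Strict Implicit. Unset Printing Implicit Defensive.
Local Open Scope ring_scope.

Lemma det2 (R : comNzRingType) (A : 'M[R]_2) : \det A = A 0 0 * A 1 1 - A 0 1 * A 1 0.
Proof.
rewrite (expand_det_row _ 0) !big_ord_recl big_ord0 addr0 /cofactor !det_mx11 !mxE /=.
rewrite !expr0 expr1 !mul1r.
rewrite mulN1r mulrN.
by congr (A _ _ * A _ _ - A _ _ * A _ _); apply/val_inj.
Qed.

Lemma det_s (K : fieldType) : \det (smx K) = -1.
Proof. by rewrite det2 !mxE /= mulr0 mulr1 sub0r. Qed.

Definition dmx (K : fieldType) (x y : K) : 'M[K]_2 :=
  \matrix_(i, j) if i == j then (if i == 0 then x else y) else 0.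

Lemma det_dmx (K : fieldType) (x y : K) : \det (dmx x y) = x * y.
Proof. by rewrite det2 !mxE /= mulr0 subr0. Qed.

Lemma inG_dmx (K : fieldType) (conj : {rmorphism K -> K}) (x y : K) :
  conj x * y = 1 -> conj y * x = 1 -> inG conj (dmx x y).
Proof.
move=> h h'; rewrite /inG /adjc; apply/matrixP => i j.
rewrite !mxE !big_ord_recl !big_ord0 !mxE !big_ord_recl !big_ord0 !mxE.
case: i => [[|[|//]] hi]; case: j => [[|[|//]] hj] /=.
all: rewrite ?rmorph0 ?mulr0 ?mul0r ?addr0 ?add0r ?mulr1 ?mul1r //.
all: by rewrite (mul0r x) || rewrite (mul0r y).
Qed.

Lemma inG_norm (K : fieldType) (conj : {rmorphism K -> K}) g :
  inG conj g -> \det g * conj (\det g) = 1.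
Proof.
move=> h; have := congr1 determinant h.
rewrite !det_mulmx det_tr det_map_mx det_s => e.
apply: (@oppr_inj _); rewrite -e; ring.
Qed.

Lemma trZ (R : comNzRingType) (a : R) (A : 'M[R]_2) : (a *: A)^T = a *: A^T.
Proof. by apply/matrixP => i j; rewrite !mxE. Qed.

Lemma inG_scale (K : fieldType) (conj : {rmorphism K -> K}) c g :
  c * conj c = 1 -> inG conj g -> inG conj (c *: g).
Proof.
move=> hc h; rewrite /inG /adjc map_mxZ trZ -!scalemxAl -scalemxAr scalerA.
by rewrite mulrC hc scale1r.
Qed.

Section Setup.
Variables (p : nat) (K : fieldType) (conj : {rmorphism K -> K}) (v : K -> int)
  (F : finFieldType) (red : K -> F).
Hypotheses (Hp : prime p) (Hodd : odd p) (HF : #|F| = (p ^ 2)%N)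
  (S : unram_quad_setup p conj v red).

Lemma v1 : v 1 = 0.
Proof.
have h : (1 : K) != 0 by exact: oner_neq0.
have := v_mul S h h; rewrite mulr1; lia.
Qed.

Lemma vN1 : v (-1) = 0.
Proof.
have h : (-1 : K) != 0 by rewrite oppr_eq0 oner_neq0.
have := v_mul S h h; rewrite mulrNN mulr1 v1; lia.
Qed.

Lemma vN x : x != 0 -> v (- x) = v x.
Proof.
move=> hx; have h : (-1 : K) != 0 by rewrite oppr_eq0 oner_neq0.
by rewrite -mulN1r (v_mul S h hx) vN1 add0r.
Qed.

Lemma vV x : x != 0 -> v x^-1 = - v x.
Proof.
move=> hx; have hi : x^-1 != 0 by rewrite invr_eq0.
have := v_mul S hx hi; rewrite mulfV // v1; lia.
Qed.

Lemma vX x n : x != 0 -> v (x ^+ n) = (n%:Z) * v x.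
Proof.
move=> hx; elim: n => [|n IH]; first by rewrite expr0 v1 mul0r.
rewrite exprS (v_mul S hx (expf_neq0 _ hx)) IH; lia.
Qed.

Lemma smallW N M x : small v N x -> M <= N -> small v M x.
Proof. by case=> [->|h] hMN; [left|right; apply: le_trans hMN h]. Qed.

Lemma smallD N x y : small v N x -> small v N y -> small v N (x + y).
Proof.
case=> [->|hx]; first by rewrite add0r.
case=> [->|hy]; first by rewrite addr0; right.
have [->|x0] := eqVneq x 0; first by rewrite add0r; right.
have [->|y0] := eqVneq y 0; first by rewrite addr0; right.
have [->|xy0] := eqVneq (x + y) 0; first by left.
right; apply: le_trans (v_add S x0 y0 xy0); by rewrite le_min hx hy.
Qed.

Lemma smallN N x : small v N x -> small v N (- x).
Proof.
case=> [->|h]; first by rewrite oppr0; left.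
have [->|x0] := eqVneq x 0; first by rewrite oppr0; left.
by right; rewrite vN.
Qed.

Lemma smallB N x y : small v N x -> small v N y -> small v N (x - y).
Proof. by move=> hx hy; apply: smallD => //; apply: smallN. Qed.

Lemma smallM N M x y : small v N x -> small v M y -> small v (N + M) (x * y).
Proof.
case=> [->|hx]; first by rewrite mul0r; left.
case=> [->|hy]; first by rewrite mulr0; left.
have [->|x0] := eqVneq x 0; first by rewrite mul0r; left.
have [->|y0] := eqVneq y 0; first by rewrite mulr0; left.
right; rewrite (v_mul S x0 y0); exact: lerD.
Qed.

Lemma small_conj N x : small v N x -> small v N (conj x).
Proof.
case=> [->|h]; first by rewrite rmorph0; left.
have [->|x0] := eqVneq x 0; first by rewrite rmorph0; left.
by right; rewrite (v_conj S x0).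
Qed.

Lemma small_all x : (forall N, small v N x) -> x = 0.
Proof.
move=> h; have [//|x0] := eqVneq x 0.
case: (h (v x + 1)) => // hv; exfalso; move: hv; lia.
Qed.

Lemma integral1 : integral v 1.
Proof. by right; rewrite v1. Qed.

Lemma integral_nat n : integral v n%:R.
Proof.
elim: n => [|n IH]; first by left.
by rewrite -addn1 natrD; apply: smallD => //; apply: integral1.
Qed.

Lemma small1_int x : small v 1 x -> integral v x.
Proof. by move/smallW; apply. Qed.

Lemma small_add1 x : small v 1 (x - 1) -> integral v x.
Proof.
move=> h; rewrite -(subrK 1 x); apply: smallD; first exact: small1_int.
exact: integral1.
Qed.

Lemma smallMi N x y : small v N x -> integral v y -> small v N (x * y).
Proof. by move=> hx hy; have := smallM hx hy; rewrite addr0. Qed.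

Lemma red0 : red 0 = 0.
Proof. have h : integral v (0:K) by left. apply: (proj2 (red_ker S h)); by left. Qed.

Lemma redD x y : integral v x -> integral v y -> red (x + y) = red x + red y.
Proof. move=> hx hy; have := red_add S hx hy. exact. Qed.

Lemma redM x y : integral v x -> integral v y -> red (x * y) = red x * red y.
Proof. move=> hx hy; have := red_mul S hx hy. exact. Qed.

Lemma redN x : integral v x -> red (- x) = - red x.
Proof.
move=> hx; apply/eqP; rewrite -addr_eq0 -redD ?addNr ?red0 //.
exact: (smallN hx).
Qed.

Lemma redB x y : integral v x -> integral v y -> red (x - y) = red x - red y.
Proof. by move=> hx hy; rewrite redD ?redN //; exact: (smallN hy). Qed.

Lemma red_nat n : red n%:R = n%:R.
Proof.
elim: n => [|n IH]; first by rewrite red0.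
by rewrite -addn1 !natrD redD ?IH ?(red_1 S) //; [apply: integral_nat|apply: integral1].
Qed.

Lemma red_eq x y : integral v x -> integral v y ->
  (red x = red y <-> small v 1 (x - y)).
Proof.
move=> hx hy; rewrite -(red_ker S); last by apply: smallB.
rewrite redB //; split => [->|/eqP]; first by rewrite subrr.
by rewrite subr_eq0 => /eqP.
Qed.

Lemma unit_v x : integral v x -> red x != 0 -> v x = 0.
Proof.
move=> hx hr; case: hx => [x0|hx]; first by rewrite x0 red0 eqxx in hr.
have : ~ small v 1 x by move/(red_ker S (or_intror hx)) => h; rewrite h eqxx in hr.
move=> h; have h1 : ~ (1 <= v x) by move=> h1; apply: h; right.
move: hx h1; lia.
Qed.

Lemma unit_inv x : integral v x -> red x != 0 ->
  integral v x^-1 /\ red x^-1 = (red x)^-1.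
Proof.
move=> hx hr; have vx := unit_v hx hr.
have x0 : x != 0 by apply: contraNneq hr => ->; rewrite red0.
have hi : integral v x^-1 by right; rewrite vV // vx.
split => //; have := redM hx hi; rewrite mulfV // (red_1 S) => h.
by apply: (mulfI hr); rewrite -h mulfV.
Qed.

Lemma charF : p \in [pchar F].
Proof. exact: card_finPcharP HF Hp. Qed.

Lemma two_neq0 : (2%:R : F) != 0.
Proof.
apply/negP; rewrite -(dvdn_pcharf charF) => /(dvdn_leq (isT : (0 < 2)%N)) le2.
have gt1 := prime_gt1 Hp; have p2 : p = 2%N by lia.
by move: Hodd; rewrite p2.
Qed.


Lemma frobD (a b : F) : (a + b) ^+ p = a ^+ p + b ^+ p.
Proof. by rewrite -!(pFrobenius_autE charF) rmorphD. Qed.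

Lemma frob2 (a : F) : (a ^+ p) ^+ p = a.
Proof. by rewrite -exprM (_ : (p * p)%N = #|F|) ?expf_card // HF expnS expn1. Qed.

Lemma natF_inj i j : (i < p)%N -> (j < p)%N -> (i%:R : F) = j%:R -> i = j.
Proof.
wlog le_ij : i j / (i <= j)%N.
  move=> W hi hj e; case: (leqP i j) => h; first exact: W.
  by apply/esym/W => //; apply: ltnW.
move=> hi hj e.
have : (p %| j - i)%N by rewrite (dvdn_pcharf charF) natrB // e subrr.
case: (posnP (j - i)) => [h0 _|hpos /(dvdn_leq hpos)]; lia.
Qed.

Lemma Fp_elt (z : F) : z ^+ p = z -> exists i, z = i%:R.
Proof.
move=> hz.
case: (boolP [exists i : 'I_p, z == (i : nat)%:R]) => [/existsP [i /eqP ->]|hn].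
  by exists i.
exfalso.
have gt1 := prime_gt1 Hp.
have sz : size ('X^p - 'X : {poly F}) = p.+1.
  by rewrite size_polyDl size_polyXn // size_polyN size_polyX.
have P0 : ('X^p - 'X : {poly F}) != 0 by rewrite -size_poly_eq0 sz.
have H := max_poly_roots P0 (rs := z :: [seq (i : nat)%:R | i <- iota 0 p]).
suff [A U] : all (root ('X^p - 'X)) (z :: [seq (i : nat)%:R | i <- iota 0 p]) /\
    uniq (z :: [seq (i : nat)%:R | i <- iota 0 p]).
  by move: (H A U); rewrite /= size_map size_iota sz ltnn.
split.
  rewrite /= rootE !hornerE hz subrr eqxx /=.
  apply/allP => x /mapP [i _ ->]; rewrite rootE !hornerE.
  by rewrite -(pFrobenius_autE charF) pFrobenius_aut_nat subrr.
rewrite /= map_inj_in_uniq ?iota_uniq ?andbT.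
  apply/mapP => [[i]]; rewrite mem_iota add0n => /andP [_ hi] e.
  by move/existsP: hn; apply; exists (Ordinal hi); rewrite e.
move=> i j; rewrite !mem_iota !add0n => /andP [_ hi] /andP [_ hj].
exact: natF_inj.
Qed.


Lemma integralM x y : integral v x -> integral v y -> integral v (x * y).
Proof. exact: smallMi. Qed.

Lemma integralX x n : integral v x -> integral v (x ^+ n).
Proof.
move=> hx; elim: n => [|n IH]; first by rewrite expr0; apply: integral1.
by rewrite exprS; apply: integralM.
Qed.

Lemma redX x n : integral v x -> red (x ^+ n) = red x ^+ n.
Proof.
move=> hx; elim: n => [|n IH]; first by rewrite !expr0 (red_1 S).
by rewrite !exprS redM ?IH //; apply: integralX.
Qed.

Lemma integral_conj x : integral v x -> integral v (conj x).
Proof. exact: small_conj. Qed.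

Lemma red_conj_fix y : integral v y -> red y ^+ p = red y -> red (conj y) = red y.
Proof.
move=> hy /Fp_elt [i hi].
have hi' : red y = red (i%:R) by rewrite red_nat.
have := (red_eq hy (integral_nat i)).1 hi' => /small_conj.
rewrite rmorphB rmorph_nat => h.
rewrite hi -(red_nat i); apply/(red_eq _ (integral_nat i)) => //.
exact: integral_conj.
Qed.

Lemma red_conj_two x : integral v x ->
  red (conj x) = red x \/ red (conj x) = red x ^+ p.
Proof.
move=> hx; set r := red x; set t := red (conj x).
have hcx := integral_conj hx.
have hxp := integralX p hx.
have hB : t + t ^+ p = r + r ^+ p.
  have hBi : integral v (x + x ^+ p) by apply: smallD.
  have := red_conj_fix hBi.
  rewrite rmorphD rmorphXn !redD ?redX //; try exact: integralX.
  apply; rewrite frobD frob2 addrC //.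
have hC : t ^+ p.+1 = r ^+ p.+1.
  have hCi : integral v (x ^+ p.+1) by apply: integralX.
  have := red_conj_fix hCi.
  rewrite rmorphXn !redX //; apply.
  by rewrite -exprM mulnC exprM exprS frob2 mulrC -exprS.
have : (t - r) * (t - r ^+ p) = 0.
  transitivity (t * t - t * (r + r ^+ p) + r ^+ p.+1); first by rewrite exprS; ring.
  by rewrite -hB -hC exprS; ring.
by move/eqP; rewrite mulf_eq0 !subr_eq0 => /orP [/eqP|/eqP]; [left|right].
Qed.


Lemma pn0 : (p%:R : K) != 0.
Proof. exact: p_neq0 S. Qed.

Lemma vpX k : v (p%:R ^+ k) = k%:Z.
Proof. by rewrite vX ?pn0 // (v_p S) mulr1. Qed.

Lemma conj_pX k : conj (p%:R ^+ k) = p%:R ^+ k.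
Proof. by rewrite rmorphXn rmorph_nat. Qed.

Lemma delta_ex : exists d, d != 0 /\ v d = 0 /\ conj d = - d.
Proof.
have [th hth] := conj_nontriv S.
set e := th - conj th.
have e0 : e != 0 by rewrite subr_eq0 eq_sym.
have ce : conj e = - e by rewrite /e rmorphB (conj_invol S) opprB.
have pk0 k : (p%:R : K) ^+ k != 0 by apply: expf_neq0; apply: pn0.
case E: (v e) => [k|k].
  exists (e / p%:R ^+ k); split; first by rewrite mulf_neq0 // invr_eq0.
  split; first by rewrite (v_mul S) ?invr_eq0 // vV // vpX E subrr.
  by rewrite rmorphM fmorphV conj_pX ce mulNr.
exists (e * p%:R ^+ k.+1); split; first by rewrite mulf_neq0.
split; first by rewrite (v_mul S) // vpX E NegzE addrC subrr.
by rewrite rmorphM conj_pX ce mulNr.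
Qed.

Lemma frob w : integral v w -> red (conj w) = red w ^+ p.
Proof.
have [d [d0 [vd cd]]] := delta_ex.
have hd : integral v d by right; rewrite vd.
have rd0 : red d != 0.
  apply/eqP => /(red_ker S hd) [|]; [exact/eqP|rewrite vd; lia].
have tdN : red (conj d) != red d.
  rewrite cd redN //; apply/eqP => /eqP; rewrite eq_sym -subr_eq0 opprK -mulr2n -mulr_natr.
  by rewrite mulf_eq0 (negbTE rd0) (negbTE two_neq0).
have tdp : red (conj d) = red d ^+ p.
  by case: (red_conj_two hd) => // h; rewrite h eqxx in tdN.
move=> hw; case: (red_conj_two hw) => // tw.
case: (eqVneq (red w) (red w ^+ p)) => [<- //|ne].
exfalso.
have hwd : integral v (w + d) by apply: smallD.
have e1 : red (conj (w + d)) = red w + red d ^+ p.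
  by rewrite rmorphD redD ?tw ?tdp //; apply: integral_conj.
case: (red_conj_two hwd); rewrite e1 redD // ?frobD.
  by move/addrI => h; move: tdN; rewrite tdp h eqxx.
by move/addIr/eqP; rewrite (negbTE ne).
Qed.


Lemma red2 : red 2%:R != 0.
Proof. by rewrite red_nat two_neq0. Qed.

Lemma two0 : (2%:R : K) != 0.
Proof. by apply: contraNneq red2 => ->; rewrite red0. Qed.

Fixpoint newt (d : K) (n : nat) : K :=
  if n is n'.+1 then (newt d n' + d / newt d n') / 2%:R else 1.

Lemma newt_step d a (N : nat) : small v 1 (a - 1) -> small v N.+1%:Z (a ^+ 2 - d) ->
  small v N.+1%:Z ((a + d / a) / 2%:R - a) /\
  small v N.+2%:Z (((a + d / a) / 2%:R) ^+ 2 - d).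
Proof.
move=> ha1 he.
have ha := small_add1 ha1.
have ra : red a = 1.
  by have := (red_eq ha integral1).2 ha1; rewrite (red_1 S).
have a0 : a != 0 by apply/eqP => a0; move: ra; rewrite a0 red0 => /eqP; rewrite eq_sym oner_eq0.
have h2a : integral v (2%:R * a) by apply: integralM => //; apply: integral_nat.
have r2a : red (2%:R * a) != 0 by rewrite redM ?ra ?mulr1 ?red2 //; apply: integral_nat.
have [hu _] := unit_inv h2a r2a.
set u := (2%:R * a)^-1 in hu.
have e1 : (a + d / a) / 2%:R - a = - (a ^+ 2 - d) * u.
  by rewrite /u; field; rewrite a0 two0.
have e2 : ((a + d / a) / 2%:R) ^+ 2 - d = (a ^+ 2 - d) * (a ^+ 2 - d) * (u * u).
  by rewrite /u; field; rewrite a0 two0.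
split; first by rewrite e1; apply: smallMi => //; apply: smallN.
rewrite e2; apply: smallMi; last exact: integralM.
apply: smallW (smallM he he) _; lia.
Qed.

Lemma newt_inv d n : small v 1 (d - 1) ->
  small v 1 (newt d n - 1) /\ small v n.+1%:Z (newt d n ^+ 2 - d) /\
  small v n.+1%:Z (newt d n.+1 - newt d n).
Proof.
move=> hd; elim: n => [|n [ha1 [he hs]]].
  have h0 : small v 1 (newt d 0 - 1) by rewrite /= subrr; left.
  have h1 : small v 1 (newt d 0 ^+ 2 - d) by rewrite /= expr1n -opprB; apply: smallN.
  by split => //; split => //; have [] := newt_step h0 h1.
have [s1 s2] := newt_step ha1 he.
have ha1' : small v 1 (newt d n.+1 - 1).
  rewrite -(subrK (newt d n) (newt d n.+1)) -addrA; apply: smallD => //.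
  by apply: smallW hs _; lia.
split => //; split => //.
have [] := newt_step ha1' s2; done.
Qed.


Lemma newt_cauchy d n k : small v 1 (d - 1) ->
  small v n.+1%:Z (newt d (n + k) - newt d n).
Proof.
move=> hd; elim: k => [|k IH]; first by rewrite addn0 subrr; left.
rewrite addnS -(subrK (newt d (n + k)) (newt d (n + k).+1)) -addrA.
apply: smallD => //; have [_ [_ h]] := newt_inv (n + k) hd.
by apply: smallW h _; lia.
Qed.

Lemma sqrt_ex d : small v 1 (d - 1) -> exists a, a ^+ 2 = d /\ small v 1 (a - 1).
Proof.
move=> hd.
have cau : forall N : int, exists M, forall m n, (M <= m)%N -> (M <= n)%N ->
    small v N (newt d m - newt d n).
  move=> N; exists `|N|%N => m n hm hn.
  have key : forall m n, (`|N| <= n)%N -> (n <= m)%N -> small v N (newt d m - newt d n).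
    move=> m' n' hn' hnm; rewrite -(subnKC hnm).
    by apply: smallW (newt_cauchy _ _ hd) _; lia.
  case: (leqP n m) => h; first exact: key.
  by rewrite -opprB; apply: smallN; apply: key => //; apply: ltnW.
have [l hl] := v_complete S cau.
have lim1 : forall N : int, exists n, (`|N| <= n)%N /\ small v (`|N| + 1)%N%:Z (newt d n - l).
  move=> N; have [M hM] := hl (`|N| + 1)%N%:Z.
  by exists (maxn M `|N|); split; [apply: leq_maxr|apply: hM; apply: leq_maxl].
exists l; split.
  apply/eqP; rewrite -subr_eq0; apply/eqP/small_all => N.
  have [n [hn hs]] := lim1 N.
  have [ha1 [he _]] := newt_inv n hd.
  have hu := small_add1 ha1.
  have e : l ^+ 2 - d = (newt d n ^+ 2 - d) - (newt d n - l) * (newt d n + l).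
    by ring.
  have hsum : integral v (newt d n + l).
    have -> : newt d n + l = 2%:R * newt d n - (newt d n - l) by ring.
    apply: smallB; first by apply: integralM => //; apply: integral_nat.
    by apply: smallW hs _; lia.
  rewrite e; apply: smallW (_ : small v (`|N| + 1)%N%:Z _) _; last by lia.
  apply: smallB; first by apply: smallW he _; lia.
  exact: smallMi.
have [n [_ hs]] := lim1 0.
have [ha1 _] := newt_inv n hd.
have -> : l - 1 = (newt d n - 1) - (newt d n - l) by ring.
by apply: smallB => //; apply: smallW hs _; lia.
Qed.


Lemma norm_facts d : d * conj d = 1 -> d != 0 /\ integral v d /\ integral v (conj d).
Proof.
move=> h.
have d0 : d != 0 by apply/eqP => d0; move: h; rewrite d0 mul0r => /eqP; rewrite eq_sym oner_eq0.
have cd0 : conj d != 0 by rewrite fmorph_eq0.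
have := v_mul S d0 cd0; rewrite h v1 (v_conj S d0) => e.
by split => //; split; right; rewrite ?(v_conj S d0); lia.
Qed.

Lemma mul_small x y : small v 1 (x - 1) -> small v 1 (y - 1) -> small v 1 (x * y - 1).
Proof.
move=> hx hy; have -> : x * y - 1 = (x - 1) * y + (y - 1) by ring.
by apply: smallD => //; apply: smallMi => //; apply: small_add1.
Qed.

Lemma sq_small c : small v 1 (c - 1) -> small v 1 (c ^+ 2 - 1).
Proof. by move=> h; rewrite expr2; apply: mul_small. Qed.

Lemma conj_small c : small v 1 (c - 1) -> small v 1 (conj c - 1).
Proof. by move/small_conj; rewrite rmorphB rmorph1. Qed.

Theorem main_thm :
  let eta := fun g : 'M[K]_2 => red (\det g) in
  (forall g, inG conj g -> eta g != 0 /\ eta g ^+ p.+1 = 1) /\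
  (forall a : F, a != 0 -> a ^+ p.+1 = 1 -> exists g, inG conj g /\ eta g = a) /\
  (forall g, inG conj g -> (eta g = 1 <-> inG0 conj v g)).
Proof.
move=> eta; rewrite /eta /=; clear eta; split.
  move=> g hg; have hn := inG_norm hg.
  have [d0 [hd hcd]] := norm_facts hn.
  have e : red (\det g) * red (\det g) ^+ p = 1.
    by rewrite -frob // -redM // hn (red_1 S).
  split; first by apply/eqP => h0; move: e; rewrite h0 mul0r => /eqP; rewrite eq_sym oner_eq0.
  by rewrite exprS.
split.
  move=> a a0 ha.
  case: (eqVneq a (-1)) => [->|am1].
    have [d [d0 [vd cd]]] := delta_ex.
    have cd0 : conj d != 0 by rewrite fmorph_eq0.
    exists (dmx d (conj d)^-1); split.
      apply: inG_dmx; first by rewrite mulfV.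
      by rewrite fmorphV (conj_invol S) mulVf.
    by rewrite det_dmx cd invrN mulrN mulfV // redN ?(red_1 S) //; apply: integral1.
  set b := 1 + a.
  have b0 : b != 0.
    by apply: contra am1; rewrite /b addrC addr_eq0 => /eqP ->.
  have [w [hw rw]] := red_surj S b.
  have rw0 : red w != 0 by rewrite rw.
  have w0 : w != 0 by apply: contraNneq rw0 => ->; rewrite red0.
  have cw0 : conj w != 0 by rewrite fmorph_eq0.
  have hcw := integral_conj hw.
  have rcw : red (conj w) = b ^+ p by rewrite frob // rw.
  have rcw0 : red (conj w) != 0 by rewrite rcw expf_neq0.
  have [hi ri] := unit_inv hcw rcw0.
  exists (dmx w (conj w)^-1); split.
    apply: inG_dmx; first by rewrite mulfV.
    by rewrite fmorphV (conj_invol S) mulVf.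
  rewrite det_dmx redM // ri rcw rw.
  have eb : b = a * b ^+ p.
    by rewrite /b frobD expr1n mulrDr mulr1 -exprS ha addrC.
  by rewrite {1}eb mulfK // expf_neq0.
move=> g hg; have hn := inG_norm hg.
have [d0 [hd hcd]] := norm_facts hn.
split.
  move=> rd.
  have hd1 : small v 1 (\det g - 1).
    by apply/(red_eq hd integral1); rewrite rd (red_1 S).
  have [a [ha2 ha1]] := sqrt_ex hd1.
  have a0 : a != 0 by apply: contraNneq d0 => a0; rewrite -ha2 a0 expr0n.
  have hca1 := conj_small ha1.
  have haa : a * conj a = 1.
    have q2 : (a * conj a) ^+ 2 = 1 by rewrite exprMn -rmorphXn ha2.
    have hq1 : small v 1 (a * conj a - 1) by apply: mul_small.
    have fq : (a * conj a) ^+ 2 - 1 = (a * conj a - 1) * (a * conj a + 1) by ring.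
    move: q2 => /eqP; rewrite -subr_eq0 fq.
    rewrite mulf_eq0 => /orP [/eqP|/eqP]; first by move/eqP; rewrite subr_eq0 => /eqP.
    move=> h; exfalso.
    have e2 : a * conj a - 1 = - 2%:R.
      have -> : a * conj a - 1 = (a * conj a + 1) - 2%:R by ring.
      by rewrite h sub0r.
    move: hq1; rewrite e2.
    move/smallN; rewrite opprK => /(red_ker S (integral_nat 2)) => h2.
    by move: red2; rewrite h2 eqxx.
  have E : g = a%:M *m (a^-1 *: g) by rewrite mul_scalar_mx scalerA mulfV // scale1r.
  rewrite /inG0 E; apply: gen_mul; apply: gen_base.
    by right; exists a.
  left; split.
    apply: inG_scale => //.
    by rewrite fmorphV -invfM haa invr1.
  by rewrite detZ exprVn ha2 mulVf.
rewrite /inG0 => hg0.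
suff [h1 _] : small v 1 (\det g - 1) /\ small v 1 ((\det g)^-1 - 1).
  by have := (red_eq hd integral1).2 h1; rewrite (red_1 S).
elim: hg0.
- move=> h [[_ ->]|[c [[hc1 hc2] ->]]].
    by rewrite invr1 subrr; split; left.
  have c0 : c != 0 by apply/eqP => c0; move: hc1; rewrite c0 mul0r => /eqP; rewrite eq_sym oner_eq0.
  have ci : c^-1 = conj c by apply: (mulfI c0); rewrite mulfV.
  rewrite det_scalar -exprVn ci; split; apply: sq_small => //.
  exact: conj_small.
- by rewrite det1 invr1 subrr; split; left.
- move=> h1 h2 _ [a1 b1] _ [a2 b2]; rewrite det_mulmx invfM; split; exact: mul_small.
- by move=> h _ [a1 b1]; rewrite det_inv invrK.
Qed.

End Setup.

Theorem lemma5p7 (p : nat) (K : fieldType) (conj : {rmorphism K -> K})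
    (v : K -> int) (F : finFieldType) (red : K -> F) :
  prime p -> odd p -> #|F| = (p ^ 2)%N ->
  unram_quad_setup p conj v red ->
  let eta := fun g : 'M[K]_2 => red (\det g) in
  (* eta lands in U(1)(F_{p^2}/F_p) *)
  (forall g, inG conj g -> eta g != 0 /\ eta g ^+ p.+1 = 1) /\
  (* eta is surjective *)
  (forall a : F, a != 0 -> a ^+ p.+1 = 1 -> exists g, inG conj g /\ eta g = a) /\
  (* ker eta = G_0 *)
  (forall g, inG conj g -> (eta g = 1 <-> inG0 conj v g)).
Proof. move=> Hp Hodd HF S; exact: main_thm. Qed.
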